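(* Let $\mathbf d=(d_1,\ldots,d_n)$ be a degree sequence with $n\ge2$ and let $v\in[n]$. Then for every $1\le k\le n-1$, \[\mathbb P(\mathfrak s_n(v)>k)=\frac{1}{\langle n\rangle_k}\sum_{(i_1,\ldots,i_k)\in J_{n,k}(v)}\ \prod_{j=1}^k d_{i_j},\] where $\langle n\rangle_k=n!/(n-k)!$ and $J_{n,k}(v)=\{(j_1,\ldots,j_k)\in([n]\setminus\{v\})^k: j_\ell\ne j_m\text{ for }\ell\ne m\}$.
   Context: A degree sequence is $\mathbf d=(d_1,\ldots,d_n)\in\mathbb N_0^n$ with $\sum_j d_j=n$. Let $\mathfrak F(\mathbf d)=\{f:[n]\to[n]: |f^{-1}(\{i\})|=d_i\ \forall i\}$ and let $F$ be uniform on $\mathfrak F(\mathbf d)$. For $f:V\to V$, $v\in V$, the six-length is $\mathfrak s_f(v)=\min\{k\in\mathbb N: f^{(k)}(v)\in\{f^{(j)}(v):0\le j\le k-1\}\}$ ($f^{(k)}$ the $k$-fold composition, $f^{(0)}=\mathrm{id}$); $\mathfrak s_n(v)=\mathfrak s_F(v)$. *)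

(* Defs.v *)
From HB Require Import structures.
From mathcomp Require Import all_boot all_order all_algebra.
Set Implicit Arguments. Unset Strict Implicit. Unset Printing Implicit Defensive.
Import Order.TTheory GRing.Theory Num.Theory.

(* "six-length": s_f(v) = min { k >= 1 : f^(k)(v) \in {f^(j)(v) : 0 <= j <= k-1} }.
   On a finite type such a k always exists and is <= #|T| (pigeonhole), so the
   minimum is computed as the first k in 1..#|T| satisfying the predicate. *)
Definition sixlen (T : finType) (f : T -> T) (v : T) : nat :=
  (find (fun k => iter k f v \in [seq iter j f v | j <- iota 0 k]) (iota 1 #|T|)).+1.

Definition degseq (n : nat) (d : 'I_n -> nat) : Prop := \sum_(i < n) d i = n.

Definition Fd (n : nat) (d : 'I_n -> nat) : {set {ffun 'I_n -> 'I_n}} :=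
  [set f : {ffun 'I_n -> 'I_n} | [forall i, #|[set x | f x == i]| == d i]].

Definition prob_sixlen_gt (n : nat) (d : 'I_n -> nat) (v : 'I_n) (k : nat) : rat :=
  (#|[set f in Fd d | (k < sixlen f v)%N]|%:R / #|Fd d|%:R)%R.

Definition J (n k : nat) (v : 'I_n) : {set {ffun 'I_k -> 'I_n}} :=
  [set t : {ffun 'I_k -> 'I_n} | injectiveb t && [forall l, t l != v]].

(* Main.v *)
Require Import Defs.
From HB Require Import structures.
From mathcomp Require Import all_boot all_order all_algebra all_fingroup.
From mathcomp Require Import ring zify.
Import Order.TTheory GRing.Theory Num.Theory.
Set Implicit Arguments. Unset Strict Implicit.

Lemma traject_map (T : eqType) (f : T -> T) v m :
  [seq iter j f v | j <- iota 0 m] = traject f v m.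
Proof.
elim: m => [//|m IH]; by rewrite -addn1 iotaD map_cat IH addn1 trajectSr cats1.
Qed.

Lemma uniq_traject_has (T : eqType) (f : T -> T) v k :
  uniq (traject f v k.+1) =
  ~~ has (fun m => iter m f v \in [seq iter j f v | j <- iota 0 m]) (iota 1 k).
Proof.
elim: k => [//|k IH].
rewrite trajectSr rcons_uniq IH -addn1 iotaD has_cat has_seq1 add1n addn1 traject_map.
by rewrite negb_or andbC.
Qed.

Lemma sixlen_gt (n : nat) (f : 'I_n -> 'I_n) v k : k < n ->
  (k < sixlen f v) = uniq (traject f v k.+1).
Proof.
move=> kn; rewrite /sixlen ltnS uniq_traject_has card_ord.
have -> : iota 1 k = take k (iota 1 n) by rewrite take_iota (minn_idPl (ltnW kn)).
by rewrite has_take_leq ?size_iota ?(ltnW kn) // -leqNgt.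
Qed.

Lemma card_cond (T : finType) (A : {set T}) (P : pred T) :
  #|[set z in A | P z]| = \sum_(z in A) (P z : nat).
Proof.
rewrite -sum1_card (eq_bigl (fun z => (z \in A) && P z)); last by move=> z; rewrite inE.
by rewrite big_mkcondr; apply: eq_bigr => z _; case: (P z).
Qed.

Lemma card_invol (T : finType) (h : T -> T) (A B : {set T}) :
  involutive h -> (forall x, x \in A -> h x \in B) -> (forall x, x \in B -> h x \in A) ->
  #|A| = #|B|.
Proof.
move=> hK hA hB; have hi : injective h by apply: inv_inj.
apply/eqP; rewrite eqn_leq; apply/andP; split.
  rewrite -(card_imset A hi); apply: subset_leq_card; apply/subsetP => y /imsetP [x xA ->].
  exact: hA.
rewrite -(card_imset B hi); apply: subset_leq_card; apply/subsetP => y /imsetP [x xA ->].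
exact: hB.
Qed.


Definition Cs n (d : 'I_n -> nat) (cs : seq ('I_n * 'I_n)) : {set {ffun 'I_n -> 'I_n}} :=
  [set f in Fd d | all (fun p => f p.1 == p.2) cs].

Lemma Fd_perm n (d : 'I_n -> nat) (s : {perm 'I_n}) f :
  f \in Fd d -> [ffun z => f (s z)] \in Fd d.
Proof.
rewrite !inE => /forallP H; apply/forallP => i.
have -> : [set z | [ffun z => f (s z)] z == i] = s @^-1: [set z | f z == i].
  by apply/setP => z; rewrite !inE ffunE.
by rewrite card_preimset; [exact: H | exact: perm_inj].
Qed.

Lemma Cs_in n (d : 'I_n -> nat) cs f :
  (f \in Cs d cs) = (f \in Fd d) && all (fun p => f p.1 == p.2) cs.
Proof. by rewrite /Cs in_set. Qed.

Lemma stepB n (d : 'I_n -> nat) cs x y :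
  x \notin unzip1 cs -> uniq (unzip1 cs) -> y \notin unzip2 cs ->
  #|Cs d ((x, y) :: cs)| * (n - size cs) = #|Cs d cs| * d y.
Proof.
move=> xS uS yS.
set C := Cs d cs.
have E1 : Cs d ((x, y) :: cs) = [set f in C | f x == y].
  by apply/setP => g; rewrite [in RHS]inE /C !Cs_in /= andbA andbAC.
pose S := [set z in unzip1 cs].
have E2 : forall x', x' \in ~: S ->
    #|[set f in C | f x == y]| = #|[set f in C | f x' == y]|.
  move=> x'; rewrite !inE => x'S.
  pose h := fun f : {ffun 'I_n -> 'I_n} => [ffun z => f (tperm x x' z)].
  have hK : involutive h by move=> f; apply/ffunP => z; rewrite !ffunE tpermK.
  have hC : forall f, f \in C -> h f \in C.
    move=> f; rewrite !Cs_in => /andP [fF /allP fa]; rewrite Fd_perm //=.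
    apply/allP => p pcs; rewrite ffunE tpermD ?fa //.
      by apply: contraNneq xS => ->; apply: map_f.
    by apply: contraNneq x'S => ->; apply: map_f.
  apply: card_invol hK _ _ => f; rewrite inE => /andP [fC fy]; rewrite inE hC //=.
    by rewrite ffunE tpermR.
  by rewrite ffunE tpermL.
have E3 : \sum_(x' in ~: S) #|[set f in C | f x' == y]| =
          \sum_(f in C) #|[set x' in ~: S | f x' == y]|.
  rewrite (eq_bigr (fun x' => \sum_(f in C) (f x' == y : nat))); last first.
    by move=> x' _; rewrite card_cond.
  rewrite exchange_big; apply: eq_bigr => f _; by rewrite card_cond.
have E4 : forall f, f \in C -> #|[set x' in ~: S | f x' == y]| = d y.
  move=> f; rewrite /C Cs_in => /andP [fF /allP fa].
  move: fF; rewrite inE => /forallP /(_ y) /eqP <-.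
  apply: eq_card => z; rewrite !inE.
  case fz: (f z == y); rewrite ?andbF ?andbT //.
  apply/negP => /mapP [p pcs zp]; move: (fa p pcs); rewrite -zp.
  move/eqP: fz => -> /eqP yp; case/negP: yS; rewrite yp; exact: map_f.
rewrite (eq_bigr (fun _ => #|[set f in C | f x == y]|)) in E3; last first.
  by move=> x' x'S; rewrite (E2 x' x'S).
rewrite [X in _ = X](eq_bigr (fun _ => d y)) in E3; last by move=> f fC; rewrite E4.
rewrite !sum_nat_const cardsCs setCK cardsE card_ord in E3.
move/card_uniqP: uS; rewrite size_map => uS.
by rewrite E1 mulnC -uS.
Qed.


Lemma stepC n (d : 'I_n -> nat) cs :
  uniq (unzip1 cs) -> uniq (unzip2 cs) -> size cs <= n ->
  #|Cs d cs| * n`! = #|Fd d| * ((n - size cs)`! * \prod_(p <- cs) d p.2).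
Proof.
elim: cs => [|[x y] cs IH] /=.
  move=> _ _ _; rewrite big_nil subn0 muln1; congr (_ * _).
  by apply: eq_card => f; rewrite Cs_in andbT.
move=> /andP [xS u1] /andP [yS u2] sz.
have B := stepB d xS u1 yS.
have IH' := IH u1 u2 (ltnW sz).
rewrite big_cons.
set m := n - (size cs).+1.
have em : n - size cs = m.+1 by rewrite /m; move: sz => /= sz; lia.
rewrite em in B IH'; rewrite factS in IH'.
apply/eqP; rewrite -(eqn_pmul2l (ltn0Sn m)); apply/eqP.
have -> : m.+1 * (#|Cs d ((x, y) :: cs)| * n`!) = (#|Cs d ((x, y) :: cs)| * m.+1) * n`!.
  by rewrite mulnA [m.+1 * _]mulnC.
rewrite B -mulnA [d y * _]mulnC mulnA IH'.
simpl; ring.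
Qed.


Lemma card_pred (T : finType) (P : pred T) :
  #|[set z | P z]| = \sum_z (P z : nat).
Proof.
rewrite -sum1_card big_mkcond /=; apply: eq_bigr => z _; rewrite inE; by case: (P z).
Qed.

Lemma Fd_ne n (d : 'I_n -> nat) (v : 'I_n) : degseq d -> 0 < #|Fd d|.
Proof.
move=> dd.
pose s := flatten [seq nseq (d i) i | i <- enum 'I_n].
have ss : size s = n.
  rewrite size_flatten /shape -map_comp (eq_map (fun i => size_nseq (d i) i)).
  by rewrite sumnE big_map big_enum /=; exact: dd.
have cs : forall i, count (pred1 i) s = d i.
  move=> i; rewrite count_flatten -map_comp.
  rewrite (eq_map (fun j => count_nseq (pred1 i) (d j) j)) sumnE big_map big_enum /=.
  rewrite (bigD1 i) //= eqxx mul1n big1 ?addn0 // => j /negbTE.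
  by rewrite eq_sym => ->.
pose f := [ffun x : 'I_n => nth v s x].
have fF : f \in Fd d.
  rewrite inE; apply/forallP => i; apply/eqP.
  rewrite card_pred -cs.
  rewrite (eq_bigr (fun x : 'I_n => (nth v s x == i) : nat)); last by move=> x _; rewrite ffunE.
  rewrite -(big_mkord xpredT (fun j => (nth v s j == i) : nat)).
  rewrite /index_iota subn0 -(big_map (nth v s) xpredT (fun y => (y == i) : nat)).
  have -> : iota 0 n = iota 0 (size s) by rewrite ss.
  rewrite -/(mkseq (nth v s) (size s)) mkseq_nth.
  rewrite -sumn_count sumnE big_map //.
by apply/card_gt0P; exists f.
Qed.


Lemma all_zip_fpath (T : eqType) (f : T -> T) x s :
  all (fun p => f p.1 == p.2) (zip (belast x s) s) = fpath f x s.
Proof. by elim: s x => [|y s IH] x //=; rewrite IH. Qed.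

Lemma codom_p n k (f : 'I_n -> 'I_n) v :
  codom [ffun j : 'I_k => iter j.+1 f v] = traject f (f v) k.
Proof.
rewrite codomE (eq_map (fun j => ffunE _ j)).
rewrite -[LHS]/(map ((fun j : nat => iter j.+1 f v) \o val) (enum 'I_k)) map_comp val_enum_ord -traject_map.
by apply: eq_map => j; apply: iterSr.
Qed.

Lemma codom_inj (T : finType) (R : eqType) (t t' : {ffun T -> R}) :
  codom t = codom t' -> t = t'.
Proof.
rewrite !codom_ffun => /val_inj H.
by rewrite -(fgraphK t) H fgraphK.
Qed.

Lemma J_uniq n k (v : 'I_n) (t : {ffun 'I_k -> 'I_n}) :
  (t \in J k v) = uniq (v :: codom t).
Proof.
rewrite inE /= andbC; congr (_ && _).
apply/forallP/idP => [H | H l].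
  by apply/codomP => [[l el]]; move: (H l); rewrite -el eqxx.
by apply: contraNneq H => <-; apply: codom_f.
Qed.

Lemma count_A n (d : 'I_n -> nat) (v : 'I_n) k : k < n ->
  #|[set f in Fd d | k < sixlen f v]| =
  \sum_(t in J k v) #|Cs d (zip (belast v (codom t)) (codom t))|.
Proof.
move=> kn.
pose p := fun f : {ffun 'I_n -> 'I_n} => [ffun j : 'I_k => iter j.+1 f v].
rewrite -sum1_card (partition_big p (mem (J k v))) /=; last first.
  move=> f; rewrite inE => /andP [_]; rewrite sixlen_gt // => u.
  by rewrite J_uniq codom_p.
apply: eq_bigr => t tJ; rewrite -sum1_card; apply: eq_bigl => f.
rewrite Cs_in all_zip_fpath inE sixlen_gt // -andbA; congr (_ && _).
rewrite J_uniq in tJ.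
apply/andP/idP => [[u /eqP <-] | fp].
  by rewrite codom_p; apply: fpath_traject.
have et : codom t = traject f (f v) k.
  by rewrite (fpathE fp) size_codom card_ord.
split; first by move: tJ; rewrite et.
by apply/eqP/codom_inj; rewrite codom_p et.
Qed.


Unset Implicit Arguments.

Lemma nat_main (n : nat) (d : 'I_n -> nat) (v : 'I_n) (k : nat) : (k < n)%N ->
  (#|[set f in Fd d | (k < sixlen f v)%N]| * n`! =
   #|Fd d| * ((n - k)`! * \sum_(t in J k v) \prod_(j < k) d (t j)))%N.
Proof.
move=> kn; rewrite count_A // big_distrl big_distrr big_distrr /=.
apply: eq_bigr => t tJ; rewrite J_uniq in tJ.
have sz : size (belast v (codom t)) = size (codom t) by rewrite size_belast.
have u1 : uniq (belast v (codom t)).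
  by move: tJ; rewrite lastI rcons_uniq => /andP [].
have u2 : uniq (codom t) by case/andP: tJ.
rewrite stepC ?unzip1_zip ?unzip2_zip ?sz //; last first.
  by rewrite size_zip sz minnn size_codom card_ord ltnW.
rewrite size_zip sz minnn size_codom card_ord; congr (_ * (_ * _)).
rewrite (_ : \prod_(p <- _) d p.2 = \prod_(y <- unzip2 (zip (belast v (codom t)) (codom t))) d y); last by rewrite big_map.
rewrite unzip2_zip ?sz //.
by rewrite codomE big_map big_enum.
Qed.

Theorem lemma3p2 (n : nat) (d : 'I_n -> nat) (v : 'I_n) (k : nat) :
  degseq d -> (2 <= n)%N -> (1 <= k)%N -> (k <= n - 1)%N ->
  prob_sixlen_gt d v k =
  ((((n - k)`!)%:R / (n`!)%:R) *
     \sum_(t in J k v) \prod_(j < k) ((d (t j))%:R : rat))%R.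
Proof.
move=> dd n2 k1 kn1.
have kn : (k < n)%N by lia.
have H := @nat_main n d v k kn.
have F0 := Fd_ne v dd.
rewrite /prob_sixlen_gt.
have -> : (\sum_(t in J k v) \prod_(j < k) ((d (t j))%:R : rat) =
           (\sum_(t in J k v) \prod_(j < k) d (t j))%N%:R)%R.
  by rewrite natr_sum; apply: eq_bigr => t _; rewrite natr_prod.
move: H; set a := #|_|; set F := #|Fd d|; set N := (\sum_(t in _) _)%N.
move=> /(congr1 (fun x => x%:R : rat)); rewrite !natrM => H.
have Fn : (F%:R : rat) != 0%R by rewrite pnatr_eq0 -lt0n.
have nn : ((n`!)%:R : rat) != 0%R by rewrite pnatr_eq0 -lt0n fact_gt0.
apply: (mulIf nn); rewrite mulrAC H; field.
by rewrite Fn nn.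
Qed.
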